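(* For finite $n$, if the Malthusian exponent $\Xi$ exists, then $\Xi<\lambda_{2,\max}^{-1}$.
   Context: $\sigma_1^2\ge\dots\ge\sigma_n^2\ge0$ are the eigenvalues of $\boldsymbol A\boldsymbol A^T$ for $\boldsymbol A\in\mathbb R^{n\times d}$; $\gamma>0$, $\zeta\in(0,1)$, $\Delta\in[0,1)$. For $j\in[n]$: $\Omega_j=1-\gamma\zeta\sigma_j^2+\Delta$, $\lambda_{2,j},\lambda_{3,j}=\frac{-2\Delta+\Omega_j^2\pm\sqrt{\Omega_j^2(\Omega_j^2-4\Delta)}}{2}$ (complex root if needed); $\lambda_{2,\max}=\max\{|\lambda_{2,j}|:\sigma_j^2>0\}$. $H_2(t)=\frac1n\sum_j\frac{2\sigma_j^4}{\Omega_j^2-4\Delta}\big(-\Delta^{t+1}+\frac12\lambda_{2,j}^{t+1}+\frac12\lambda_{3,j}^{t+1}\big)$ (by continuity when $\Omega_j^2=4\Delta$). The Malthusian exponent $\Xi$ is the unique solution of $\gamma^2\zeta(1-\zeta)\sum_{t=0}^\infty\Xi^tH_2(t)=1$, when such a solution exists. *)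

(* Defs.v *)
From mathcomp Require Import all_boot all_order all_algebra.
From mathcomp Require Import all_classical all_reals all_analysis.
From mathcomp Require Import complex.
Set Implicit Arguments. Unset Strict Implicit. Unset Printing Implicit Defensive.
Import Order.TTheory GRing.Theory Num.Theory.
Import numFieldNormedType.Exports.
Local Open Scope ring_scope.

Section Defs.
Variable R : realType.
Variables (n : nat) (sigma2 : 'I_n -> R) (gamma zeta Delta : R).

Definition Omega (j : 'I_n) : R := 1 - gamma * zeta * sigma2 j + Delta.

(* lambda_{2,j}, lambda_{3,j} : roots with + / - sign, in R[i];
   sqrtc is the principal complex square root (gives i*sqrt(-x) for x<0). *)
Definition lambda2 (j : 'I_n) : R[i] :=
  ((- (2 * Delta) + Omega j ^+ 2)%:C%C
     + sqrtc ((Omega j ^+ 2 * (Omega j ^+ 2 - 4 * Delta))%:C%C)) / 2%:R.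
Definition lambda3 (j : 'I_n) : R[i] :=
  ((- (2 * Delta) + Omega j ^+ 2)%:C%C
     - sqrtc ((Omega j ^+ 2 * (Omega j ^+ 2 - 4 * Delta))%:C%C)) / 2%:R.

Definition cmod (z : R[i]) : R := complex.Re `|z|.

Definition lambda2max : R :=
  \big[Num.max/0]_(j < n | 0 < sigma2 j) cmod (lambda2 j).

(* When
   Omega_j^2 = 4 Delta it is defined by continuity; the continuous extension
   of (-Delta^(t+1) + (lambda2^(t+1) + lambda3^(t+1))/2) / (Omega^2 - 4 Delta)
   at Omega^2 = 4 Delta equals (t+1)^2 Delta^t / 2. *)
Definition H2term (j : 'I_n) (t : nat) : R :=
  if Omega j ^+ 2 == 4 * Delta then
    2 * sigma2 j ^+ 2 * ((t.+1 ^ 2)%:R * Delta ^+ t / 2)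
  else
    complex.Re
      ((2 * sigma2 j ^+ 2 / (Omega j ^+ 2 - 4 * Delta))%:C%C
       * ((- Delta ^+ t.+1)%:C%C + lambda2 j ^+ t.+1 / 2%:R
          + lambda3 j ^+ t.+1 / 2%:R)).

Definition H2 (t : nat) : R := n%:R^-1 * \sum_(j < n) H2term j t.

Definition malthus_eq (Xi : R) : Prop :=
  cvgn ((series (fun t : nat => Xi ^+ t * H2 t) : R^nat)) /\
  gamma ^+ 2 * zeta * (1 - zeta) * limn ((series (fun t : nat => Xi ^+ t * H2 t) : R^nat)) = 1.

Definition malthusian_exponent (Xi : R) : Prop :=
  malthus_eq Xi /\ forall Xi' : R, malthus_eq Xi' -> Xi' = Xi.

End Defs.

(* Main.v *)
Require Import Defs.
From mathcomp Require Import all_boot all_order all_algebra.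
From mathcomp Require Import all_classical all_reals all_analysis.
From mathcomp Require Import complex ring lra.
Import Order.TTheory GRing.Theory Num.Theory.
Import numFieldNormedType.Exports.
Local Open Scope ring_scope.
Set Implicit Arguments. Unset Strict Implicit. Unset Printing Implicit Defensive.
Section Seq.
Variable R : realType.
Fixpoint uu (O Dl : R) (t : nat) : R * R :=
  match t with
  | 0%N => (1, 0)
  | t'.+1 => (O * (uu O Dl t').1 - Dl * (uu O Dl t').2, (uu O Dl t').1)
  end.

Lemma uuQ O Dl t :
  (uu O Dl t).1 ^+ 2 - O * (uu O Dl t).1 * (uu O Dl t).2 + Dl * (uu O Dl t).2 ^+ 2
  = Dl ^+ t.
Proof.
elim: t => [|t IH] /=; first by ring.
rewrite [Dl ^+ t.+1]exprS -IH; ring.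
Qed.

Lemma uu_lin O Dl m2 m3 t : m2 + m3 = O -> m2 * m3 = Dl ->
  (uu O Dl t).1 - m3 * (uu O Dl t).2 = m2 ^+ t.
Proof.
move=> hO hD; elim: t => [|t IH] /=; first by ring.
rewrite exprS -IH -hO -hD; ring.
Qed.

Lemma uu_deg O Dl t : O ^+ 2 = 4 * Dl ->
  (uu O Dl t).1 = t.+1%:R * (O / 2) ^+ t /\ O / 2 * (uu O Dl t).2 = t%:R * (O / 2) ^+ t.
Proof.
move=> hO; have hD : Dl = (O/2) ^+ 2 by rewrite expr_div_n hO; field.
set h := O / 2 in hD *.
have hO2 : O = 2 * h by rewrite /h; field.
elim: t => [|t [IH1 IH2]] /=; first by split; ring.
split; last by rewrite IH1 exprS; ring.
rewrite IH1.
have -> : Dl * (uu O Dl t).2 = h * (h * (uu O Dl t).2) by rewrite hD; ring.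
rewrite IH2 [in RHS]exprS -[t.+2%:R]natr1 -[t.+1%:R]natr1 hO2; ring.
Qed.

Lemma uu_w O Dl t :
  let P := O ^+ 2 - 2 * Dl in let D := O ^+ 2 - 4 * Dl in
  D * (uu O Dl t.+2).2 ^+ 2 + 2 * Dl ^+ t.+2 =
  P * (D * (uu O Dl t.+1).2 ^+ 2 + 2 * Dl ^+ t.+1)
  - Dl ^+ 2 * (D * (uu O Dl t).2 ^+ 2 + 2 * Dl ^+ t).
Proof.
move=> P D /=.
rewrite [Dl ^+ t.+2]exprS [Dl ^+ t.+1]exprS -(uuQ O Dl t) /P /D; ring.
Qed.
End Seq.
Section Cplx.
Variable R : realType.
Local Open Scope complex_scope.

Lemma lam_sq (O Dl : R) (s : R[i]) :
  s ^+ 2 = (O ^+ 2 * (O ^+ 2 - 4 * Dl))%:C ->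
  (((- (2 * Dl) + O ^+ 2)%:C + s) / 2%:R) ^+ 2 =
  (O ^+ 2 - 2 * Dl)%:C * (((- (2 * Dl) + O ^+ 2)%:C + s) / 2%:R) - (Dl ^+ 2)%:C.
Proof.
move=> hs.
have h2 : (2%:R : R[i]) != 0 by rewrite pnatr_eq0.
apply/eqP; rewrite -subr_eq0; apply/eqP.
have -> : forall a b : R[i], a - b = a - b by [].
transitivity ((s ^+ 2 - (O ^+ 2 * (O ^+ 2 - 4 * Dl))%:C) / 4%:R).
  by field.
by rewrite hs subrr mul0r.
Qed.
End Cplx.
Section Cplx2.
Variable R : realType.
Local Open Scope complex_scope.

Lemma lam_sum (O Dl : R) (s : R[i]) t :
  s ^+ 2 = (O ^+ 2 * (O ^+ 2 - 4 * Dl))%:C ->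
  (((- (2 * Dl) + O ^+ 2)%:C + s) / 2%:R) ^+ t +
  (((- (2 * Dl) + O ^+ 2)%:C - s) / 2%:R) ^+ t =
  ((O ^+ 2 - 4 * Dl) * (uu O Dl t).2 ^+ 2 + 2 * Dl ^+ t)%:C.
Proof.
move=> hs.
have hs' : (- s) ^+ 2 = (O ^+ 2 * (O ^+ 2 - 4 * Dl))%:C by rewrite sqrrN.
set l2 := (_ + s) / _; set l3 := (_ - s) / _.
have E2 := lam_sq hs; have E3 := lam_sq hs'.
rewrite -/l2 in E2; rewrite -/l3 in E3.
have h2 : (2%:R : R[i]) != 0 by rewrite pnatr_eq0.
suff: forall t, (l2 ^+ t + l3 ^+ t =
  ((O ^+ 2 - 4 * Dl) * (uu O Dl t).2 ^+ 2 + 2 * Dl ^+ t)%:C) /\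
  (l2 ^+ t.+1 + l3 ^+ t.+1 =
  ((O ^+ 2 - 4 * Dl) * (uu O Dl t.+1).2 ^+ 2 + 2 * Dl ^+ t.+1)%:C).
  by move=> /(_ t) [].
elim=> [|k [IH1 IH2]].
  split; rewrite /= ?expr0 ?expr1.
    by ring.
  by rewrite /l2 /l3; field.
split; first exact: IH2.
have -> : l2 ^+ k.+2 + l3 ^+ k.+2 =
  (O ^+ 2 - 2 * Dl)%:C * (l2 ^+ k.+1 + l3 ^+ k.+1) - (Dl ^+ 2)%:C * (l2 ^+ k + l3 ^+ k).
  rewrite -[k.+2]addn2 !exprD E2 E3 !exprS; ring.
rewrite IH1 IH2 uu_w; ring.
Qed.
End Cplx2.
Section H2.
Variable R : realType.
Local Open Scope complex_scope.
Lemma H2term_eq (n : nat) (sigma2 : 'I_n -> R) gamma zeta Delta j t :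
  H2term sigma2 gamma zeta Delta j t =
  sigma2 j ^+ 2 * (uu (Omega sigma2 gamma zeta Delta j) Delta t).1 ^+ 2.
Proof.
rewrite /H2term /lambda2 /lambda3.
move: (Omega sigma2 gamma zeta Delta j) => O.
case: eqP => [hD|hD].
  have [h1 _] := uu_deg t hD.
  have hD' : Delta = (O/2) ^+ 2 by rewrite expr_div_n hD; field.
  by rewrite h1 hD' natrX -!exprM mulnC [in RHS]exprMn -[in RHS]exprM; field.
transitivity (complex.Re ((2 * sigma2 j ^+ 2 / (O ^+ 2 - 4 * Delta))%:C *
   ((- Delta ^+ t.+1)%:C + ((O ^+ 2 - 4 * Delta) * (uu O Delta t.+1).2 ^+ 2
      + 2 * Delta ^+ t.+1)%:C / 2%:R))).
  congr (complex.Re (_ * _)).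
  rewrite -(lam_sum t.+1 (sqr_sqrtc _)).
  by rewrite [in RHS]mulrDl addrA.
rewrite /=.
have hD0 : O ^+ 2 - 4 * Delta != 0 by apply/eqP => /eqP; rewrite subr_eq0 => /eqP.
by field.
Qed.

End H2.
Section LB.
Variable R : realType.

Lemma LB1 (O Dl : R) t : 0 <= Dl ->
  Dl ^+ t / (1 + `|O| + Dl) <= (uu O Dl t).1 ^+ 2 + (uu O Dl t).2 ^+ 2.
Proof.
move=> hDl; rewrite -(uuQ O Dl t).
set a := (uu O Dl t).1; set b := (uu O Dl t).2.
have hC : 0 < 1 + `|O| + Dl by rewrite -addrA ltr_pwDl // addr_ge0.
rewrite ler_pdivrMr //.
have h1 : - (O * a * b) <= `|O| * (a ^+ 2 + b ^+ 2).
  have : `|a * b| * 2 <= a ^+ 2 + b ^+ 2.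
    have := sqr_ge0 (a - b); have := sqr_ge0 (a + b).
    case: (lerP 0 (a * b)) => hab; [rewrite ger0_norm // | rewrite ltr0_norm //]; nra.
  have : - (O * a * b) <= `|O| * `|a * b|.
    rewrite -mulrA -normrM; apply: le_trans (ler_norm _) _; rewrite normrN.
    by [].
  have := normr_ge0 O; have := normr_ge0 (a * b); nra.
have h2 : Dl * b ^+ 2 <= Dl * (a ^+ 2 + b ^+ 2).
  by rewrite ler_wpM2l // lerDr sqr_ge0.
have := sqr_ge0 a; have := sqr_ge0 b; have := normr_ge0 O; nra.
Qed.

Lemma LB2 (O Dl m2 m3 : R) t : m2 + m3 = O -> m2 * m3 = Dl ->
  (m2 ^+ 2) ^+ t / (1 + m3 ^+ 2) <= (uu O Dl t).1 ^+ 2 + (uu O Dl t).2 ^+ 2.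
Proof.
move=> h1 h2; rewrite -exprM mulnC exprM -(uu_lin t h1 h2).
set a := (uu O Dl t).1; set b := (uu O Dl t).2.
have hC : 0 < 1 + m3 ^+ 2 by rewrite ltr_pwDl // sqr_ge0.
rewrite ler_pdivrMr //.
have := sqr_ge0 (m3 * a + b); nra.
Qed.

Lemma lb_main (O Dl Xi r c : R) : 0 < r -> 0 < c -> 1 <= Xi * r ->
  (forall t, c * r ^+ t <= (uu O Dl t).1 ^+ 2 + (uu O Dl t).2 ^+ 2) ->
  forall t, c * Num.min 1 r <=
    Xi ^+ t.+1 * (uu O Dl t.+1).1 ^+ 2 + Xi ^+ t * (uu O Dl t).1 ^+ 2.
Proof.
move=> hr hc hX H t.
have := H t.+1; rewrite [(uu O Dl t.+1).2]/=.
set a := (uu O Dl t.+1).1; set b := (uu O Dl t).1 => Hab.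
set m := Num.min 1 r.
have hm1 : m <= 1 by rewrite /m ge_min lexx.
have hmr : m <= r by rewrite /m ge_min lexx orbT.
have hm0 : 0 < m by rewrite /m lt_min ltr01 hr.
have hX0 : 0 < Xi.
  have : 0 < Xi * r by apply: lt_le_trans hX.
  by rewrite pmulr_lgt0.
have hq : 0 < r ^+ t by apply: exprn_gt0.
have e1 : 1 <= Xi ^+ t.+1 * r ^+ t.+1 by rewrite -exprMn exprn_ege1.
have e0 : 1 <= Xi ^+ t * r ^+ t by rewrite -exprMn exprn_ege1.
have hX1 : 0 <= Xi ^+ t.+1 by apply: exprn_ge0; apply: ltW.
have hX2 : 0 <= Xi ^+ t by apply: exprn_ge0; apply: ltW.
have ha := sqr_ge0 a; have hb := sqr_ge0 b.
rewrite [r ^+ t.+1]exprS in e1 Hab.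
set q := r ^+ t in hq e1 e0 Hab.
set X1 := Xi ^+ t.+1 in e1 hX1 *.
set X0 := Xi ^+ t in e0 hX2 *.
have s1 : a ^+ 2 <= X1 * (r * q) * a ^+ 2.
  rewrite -subr_ge0 -{2}(mul1r (a^+2)) -mulrBl; apply: mulr_ge0 => //.
  by rewrite subr_ge0.
have s2 : r * b ^+ 2 <= r * (X0 * q) * b ^+ 2.
  rewrite -mulrA ler_wpM2l ?(ltW hr) //.
  rewrite -subr_ge0 -{2}(mul1r (b^+2)) -mulrBl; apply: mulr_ge0 => //.
  by rewrite subr_ge0.
have s3 : m * (a ^+ 2 + b ^+ 2) <= a ^+ 2 + r * b ^+ 2 by nra.
have s4 : m * c * (r * q) <= m * (a ^+ 2 + b ^+ 2).
  by rewrite -mulrA ler_wpM2l // ltW.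
have hrq : 0 < r * q by rewrite mulr_gt0.
rewrite -(ler_pM2r hrq).
nra.
Qed.
End LB.
Section Cm.
Variable R : realType.
Local Open Scope complex_scope.
Lemma sqrtc_real (x : R) : sqrtc (x%:C) =
  Complex (Num.sqrt ((`|x| + x)/2%:R)) (Num.sqrt ((`|x| - x)/2%:R)).
Proof.
rewrite /sqrtc /= eqxx mul1r expr0n addr0 sqrtr_sqr. by [].
Qed.

Lemma cmod_lam2 (n : nat) (sigma2 : 'I_n -> R) gamma zeta Delta j :
  let O := Omega sigma2 gamma zeta Delta j in
  let x := O ^+ 2 * (O ^+ 2 - 4 * Delta) in
  cmod (lambda2 sigma2 gamma zeta Delta j) =
  Num.sqrt (((O ^+ 2 - 2 * Delta + Num.sqrt ((`|x| + x)/2)) / 2) ^+ 2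
            + (Num.sqrt ((`|x| - x)/2) / 2) ^+ 2).
Proof.
rewrite /cmod normc_def /lambda2.
move: (Omega sigma2 gamma zeta Delta j) => O.
set s := sqrtc _.
have -> : s = Complex (Num.sqrt ((`|O ^+ 2 * (O ^+ 2 - 4 * Delta)| + O ^+ 2 * (O ^+ 2 - 4 * Delta))/2%:R))
   (Num.sqrt ((`|O ^+ 2 * (O ^+ 2 - 4 * Delta)| - O ^+ 2 * (O ^+ 2 - 4 * Delta))/2%:R)).
  rewrite /s; apply: sqrtc_real.
rewrite /=.
by apply: congr1; field.
Qed.
End Cm.
Section Cm2.
Variable R : realType.
Lemma cmod_pos (n : nat) (sigma2 : 'I_n -> R) gamma zeta Delta j :
  let O := Omega sigma2 gamma zeta Delta j in
  0 <= Delta -> 0 < O ^+ 2 - 4 * Delta ->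
  cmod (lambda2 sigma2 gamma zeta Delta j) =
  (O ^+ 2 - 2 * Delta + `|O| * Num.sqrt (O ^+ 2 - 4 * Delta)) / 2.
Proof.
move=> O hD hP; rewrite cmod_lam2 -/O.
have hx : 0 <= O ^+ 2 * (O ^+ 2 - 4 * Delta) by rewrite mulr_ge0 ?sqr_ge0 ?ltW.
rewrite ger0_norm // subrr mul0r sqrtr0 mul0r expr0n /= addr0.
have -> : (O ^+ 2 * (O ^+ 2 - 4 * Delta) + O ^+ 2 * (O ^+ 2 - 4 * Delta)) / 2
   = O ^+ 2 * (O ^+ 2 - 4 * Delta) by field.
rewrite [Num.sqrt (O ^+ 2 * _)]sqrtrM ?sqr_ge0 // [Num.sqrt (O ^+ 2)]sqrtr_sqr sqrtr_sqr ger0_norm //.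
apply: divr_ge0 => //; apply: addr_ge0; last by rewrite mulr_ge0 ?sqrtr_ge0.
lra.
Qed.

Lemma cmod_neg (n : nat) (sigma2 : 'I_n -> R) gamma zeta Delta j :
  let O := Omega sigma2 gamma zeta Delta j in
  0 <= Delta -> O ^+ 2 - 4 * Delta <= 0 ->
  cmod (lambda2 sigma2 gamma zeta Delta j) = Delta.
Proof.
move=> O hD hP; rewrite cmod_lam2 -/O.
have hx : O ^+ 2 * (O ^+ 2 - 4 * Delta) <= 0 by rewrite mulr_ge0_le0 ?sqr_ge0.
rewrite ler0_norm // addNr mul0r sqrtr0 addr0.
rewrite [(Num.sqrt _ / 2) ^+ 2]expr_div_n sqr_sqrtr; last by apply: divr_ge0 => //; lra.
rewrite -[RHS](ger0_norm hD) -sqrtr_sqr; apply: congr1; by field.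
Qed.
End Cm2.
Section Mx.
Variable R : realType.
Variables (n : nat) (sigma2 : 'I_n -> R) (gamma zeta Delta : R).

Lemma cmod_ge0 (z : R[i]) : 0 <= cmod z.
Proof. by rewrite /cmod normc_def /=; apply: sqrtr_ge0. Qed.

Lemma bigmax_cases :
  lambda2max sigma2 gamma zeta Delta = 0 \/
  exists j, 0 < sigma2 j /\
    lambda2max sigma2 gamma zeta Delta = cmod (lambda2 sigma2 gamma zeta Delta j).
Proof.
rewrite /lambda2max.
apply: (big_ind (fun x => x = 0 \/ exists j, 0 < sigma2 j /\
    x = cmod (lambda2 sigma2 gamma zeta Delta j))).
- by left.
- by move=> x y hx hy; rewrite /Order.max; case: ifP.
- by move=> i hi; right; exists i.
Qed.

Lemma bigmax_ge j : 0 < sigma2 j ->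
  cmod (lambda2 sigma2 gamma zeta Delta j) <= lambda2max sigma2 gamma zeta Delta.
Proof. by move=> hj; rewrite /lambda2max (bigD1 j) //= le_max lexx. Qed.

Lemma H2term_ge0 j t : 0 <= H2term sigma2 gamma zeta Delta j t.
Proof. by rewrite H2term_eq mulr_ge0 ?sqr_ge0. Qed.

Lemma H2_ge j t : 
  H2term sigma2 gamma zeta Delta j t / n%:R <= H2 sigma2 gamma zeta Delta t.
Proof.
rewrite /H2 [X in _ <= X]mulrC ler_wpM2r ?invr_ge0 ?ler0n //.
rewrite (bigD1 j) //= lerDl; apply: sumr_ge0 => i _; exact: H2term_ge0.
Qed.
End Mx.
Unset Implicit Arguments.
Theorem proposition14 (R : realType) (n d : nat) (A : 'M[R]_(n, d))
  (sigma2 : 'I_n -> R) (gamma zeta Delta : R) :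
  (* sigma_1^2 >= ... >= sigma_n^2 >= 0 are the eigenvalues of A A^T *)
  char_poly (A *m A^T) = \prod_(j < n) ('X - (sigma2 j)%:P) ->
  (forall i j : 'I_n, (i <= j)%N -> sigma2 j <= sigma2 i) ->
  (forall j : 'I_n, 0 <= sigma2 j) ->
  0 < gamma -> 0 < zeta < 1 -> 0 <= Delta < 1 ->
  forall Xi : R, malthusian_exponent sigma2 gamma zeta Delta Xi ->
  Xi < (lambda2max sigma2 gamma zeta Delta)^-1.
Proof.
move=> _ _ hs0 _ _ /andP[hD0 _] Xi [[hcv heq] huniq].
set L := lambda2max sigma2 gamma zeta Delta.
have [L0|Ln0] := eqVneq L 0.
  exfalso.
  have Hdeg : forall j, 0 < sigma2 j ->
      Omega sigma2 gamma zeta Delta j = 0 /\ Delta = 0.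
    move=> j hj.
    have hc : cmod (lambda2 sigma2 gamma zeta Delta j) = 0.
      apply/eqP; rewrite eq_le cmod_ge0 andbT -L0; exact: bigmax_ge.
    set O := Omega sigma2 gamma zeta Delta j.
    case: (ltrP 0 (O ^+ 2 - 4 * Delta)) => hP.
      rewrite cmod_pos // -/O in hc.
      have : 0 <= `|O| * Num.sqrt (O ^+ 2 - 4 * Delta) by rewrite mulr_ge0 ?sqrtr_ge0.
      lra.
    rewrite cmod_neg // in hc; split => //.
    rewrite hc mulr0 subr0 in hP.
    have : O ^+ 2 = 0 by apply/eqP; rewrite eq_le hP sqr_ge0.
    by move/eqP; rewrite sqrf_eq0 => /eqP.
  have H0 : forall t, H2 sigma2 gamma zeta Delta t.+1 = 0.
    move=> t; rewrite /H2 big1 ?mulr0 // => i _.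
    rewrite H2term_eq.
    have [hi|hi] := eqVneq (sigma2 i) 0; first by rewrite hi expr0n mul0r.
    have hi' : 0 < sigma2 i by rewrite lt_def hi hs0.
    have [-> ->] := Hdeg i hi'.
    by rewrite /= !mul0r subrr expr0n mulr0.
  have Hf : (fun t => Xi ^+ t * H2 sigma2 gamma zeta Delta t) =
            (fun t => (Xi + 1) ^+ t * H2 sigma2 gamma zeta Delta t).
    by apply: funext => -[|t]; rewrite ?expr0 // H0 !mulr0.
  have hm : malthus_eq sigma2 gamma zeta Delta (Xi + 1).
    by rewrite /malthus_eq -Hf.
  move/huniq: hm => /eqP; rewrite -subr_eq0 addrAC subrr add0r.
  by rewrite oner_eq0.
have [hL0'|[j [hj hL]]] := bigmax_cases sigma2 gamma zeta Delta.
  by move: Ln0; rewrite /L hL0' eqxx.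
rewrite -/L in hL.
have hL0 : 0 < L by rewrite lt_def Ln0 hL cmod_ge0.
rewrite ltNge; apply/negP => hXi.
have hXL : 1 <= Xi * L.
  by rewrite -(ler_pM2r hL0) mulVf // in hXi.
set O := Omega sigma2 gamma zeta Delta j.
set u := uu O Delta.
have [r [c [hr [hc [hXr Hlb]]]]] : exists r c : R, 0 < r /\ 0 < c /\ 1 <= Xi * r /\
    forall t, c * r ^+ t <= (u t).1 ^+ 2 + (u t).2 ^+ 2.
  case: (ltrP 0 (O ^+ 2 - 4 * Delta)) => hP.
    have hL' := hL; rewrite cmod_pos // -/O in hL'.
    set D := O ^+ 2 - 4 * Delta in hP hL'.
    have hsD : Num.sqrt D ^+ 2 = D by rewrite sqr_sqrtr // ltW.
    have [m2 [m3 [h1 [h2 h3]]]] : exists m2 m3, m2 + m3 = O /\ m2 * m3 = Delta /\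
        m2 ^+ 2 = L.
      case: (lerP 0 O) => hO.
        exists ((O + Num.sqrt D) / 2), ((O - Num.sqrt D) / 2).
        split; first by field.
        split.
          have -> : (O + Num.sqrt D) / 2 * ((O - Num.sqrt D) / 2) =
            (O ^+ 2 - Num.sqrt D ^+ 2) / 4 by field.
          by rewrite hsD /D; field.
        rewrite hL' ger0_norm //.
        have -> : ((O + Num.sqrt D) / 2) ^+ 2 =
          (O ^+ 2 + 2 * O * Num.sqrt D + Num.sqrt D ^+ 2) / 4 by field.
        by rewrite hsD /D; field.
      exists ((O - Num.sqrt D) / 2), ((O + Num.sqrt D) / 2).
      split; first by field.
      split.
        have -> : (O - Num.sqrt D) / 2 * ((O + Num.sqrt D) / 2) =
          (O ^+ 2 - Num.sqrt D ^+ 2) / 4 by field.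
        by rewrite hsD /D; field.
      rewrite hL' ltr0_norm //.
      have -> : ((O - Num.sqrt D) / 2) ^+ 2 =
        (O ^+ 2 - 2 * O * Num.sqrt D + Num.sqrt D ^+ 2) / 4 by field.
      by rewrite hsD /D; field.
    exists L, (1 + m3 ^+ 2)^-1.
    split => //.
    have hm3 : 0 < 1 + m3 ^+ 2 by rewrite ltr_pwDl // sqr_ge0.
    split; first by rewrite invr_gt0.
    split => // t.
    rewrite -h3 mulrC; exact: (LB2 t h1 h2).
  have hL' := hL; rewrite cmod_neg // -/O in hL'.
  exists L, (1 + `|O| + Delta)^-1.
  have hC : 0 < 1 + `|O| + Delta by rewrite -addrA ltr_pwDl // addr_ge0.
  split => //; split; first by rewrite invr_gt0.
  split => // t.
  rewrite hL' mulrC; exact: (LB1 O t hD0).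
have K := lb_main hr hc hXr Hlb.
set k := c * Num.min 1 r in K.
have hk : 0 < k by rewrite /k mulr_gt0 // lt_min ltr01 hr.
have hn : (0 < n)%N by apply: leq_ltn_trans (leq0n j) (ltn_ord j).
have hn' : 0 < n%:R :> R by rewrite ltr0n.
set Aa := sigma2 j ^+ 2 / n%:R.
have hA : 0 < Aa by rewrite /Aa divr_gt0 // exprn_gt0.
have hXi0 : 0 < Xi.
  have : 0 < Xi * r by apply: lt_le_trans hXr.
  by rewrite pmulr_lgt0.
set f := fun t => Xi ^+ t * H2 sigma2 gamma zeta Delta t.
have hf : forall t, Aa * (Xi ^+ t * (u t).1 ^+ 2) <= f t.
  move=> t; rewrite /f.
  have := H2_ge sigma2 gamma zeta Delta j t.
  rewrite H2term_eq -/O -/u => hh.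
  have hXt : 0 <= Xi ^+ t by rewrite exprn_ge0 // ltW.
  have -> : Aa * (Xi ^+ t * (u t).1 ^+ 2) =
    Xi ^+ t * (sigma2 j ^+ 2 * (u t).1 ^+ 2 / n%:R).
    by rewrite /Aa; field; rewrite gt_eqF.
  by rewrite ler_wpM2l.
have f0 := cvg_series_cvg_0 hcv.
have heps : 0 < Aa * k / 2 by rewrite divr_gt0 // mulr_gt0.
move/cvgr0Pnorm_lt: f0 => /(_ _ heps).
case=> N _ HN.
have hN1 := HN N (leqnn N).
have hN2 := HN N.+1 (leqnSn N).
have hfN1 := hf N; have hfN2 := hf N.+1.
have KN := K N.
rewrite -/f /= in hN1 hN2.
have := ler_norm (f N); have := ler_norm (f N.+1).
rewrite /f in hN1 hN2 hfN1 hfN2 * => e1 e2.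
have : Aa * k <= Aa * (Xi ^+ N.+1 * (u N.+1).1 ^+ 2 + Xi ^+ N * (u N).1 ^+ 2).
  by rewrite ler_wpM2l // ltW.
rewrite mulrDr.
lra.
Qed.
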